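(* Let $X$ be a Markov chain on a finite state space $\Omega$, let $y\in\Omega$, and let $T$ be a positive integer. Let $x\in\Omega$ be a state minimizing $\mathbb{P}_x(\tau_y\le T)$ over all starting states, where $\tau_y$ is the hitting time of $y$. Then $\mathbb{P}_x(\tau_y\le T)\le\frac{T}{\mathbb{E}_x\tau_y}$.
   Context: $\tau_y=\min\{t\ge0:X_t=y\}$; $\mathbb{P}_x,\mathbb{E}_x$ refer to the chain started at $x$. *)

(* Defs.v *)
From mathcomp Require Import all_boot all_order all_algebra.
From mathcomp Require Import all_classical all_reals.
From mathcomp Require Import ereal sequences.
Set Implicit Arguments. Unset Strict Implicit. Unset Printing Implicit Defensive.
Import Order.TTheory GRing.Theory Num.Theory.
Local Open Scope ring_scope.

(* A Markov chain on the finite state space S is given by its transition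
   matrix P : S -> S -> R (nonnegative entries, rows summing to 1). *)
Definition stochastic (R : realType) (S : finType) (P : S -> S -> R) : Prop :=
  (forall a b, 0 <= P a b) /\ (forall a, \sum_(b : S) P a b = 1).

Definition path_weight (R : realType) (S : finType) (P : S -> S -> R) (n : nat)
  (f : {ffun 'I_n.+1 -> S}) : R :=
  \prod_(k < n) P (f (inord k)) (f (inord k.+1)).

(* P_x(tau_y = n), tau_y = min{t >= 0 : X_t = y}: sum of the probabilities of
   all trajectories x = X_0, ..., X_n = y with X_k <> y for k < n. *)
Definition hit_exact (R : realType) (S : finType) (P : S -> S -> R) (y : S)
  (n : nat) (x : S) : R :=
  \sum_(f : {ffun 'I_n.+1 -> S} |
          [&& f ord0 == x, f ord_max == y &
              [forall k : 'I_n.+1, (val k < n)%N ==> (f k != y)]])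
    path_weight P f.

Definition hit_le (R : realType) (S : finType) (P : S -> S -> R) (y : S)
  (T : nat) (x : S) : R :=
  \sum_(0 <= n < T.+1) hit_exact P y n x.

(* E_x tau_y in [0, +oo]: the expectation of the [0,+oo]-valued variable
   tau_y; it is +oo when P_x(tau_y < oo) < 1. *)
Definition exp_hit (R : realType) (S : finType) (P : S -> S -> R) (y : S)
  (x : S) : \bar R :=
  if (\sum_(n <oo) (hit_exact P y n x)%:E == 1%E)%E
  then (\sum_(n <oo) (n%:R * hit_exact P y n x)%:E)%E
  else (+oo)%E.

(* Main.v *)
Require Import Defs.
From mathcomp Require Import all_boot all_order all_algebra.
From mathcomp Require Import all_classical all_reals.
From mathcomp Require Import ereal sequences.
From mathcomp Require Import all_analysis.
From mathcomp Require Import ring lra.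
Import Order.TTheory GRing.Theory Num.Theory.
Set Implicit Arguments. Unset Strict Implicit. Unset Printing Implicit Defensive.
Local Open Scope ring_scope.

Definition fcons (S : finType) n (a : S) (g : {ffun 'I_n.+1 -> S}) : {ffun 'I_n.+2 -> S} :=
  [ffun i => if unlift ord0 i is Some j then g j else a].
Definition ftail (S : finType) n (f : {ffun 'I_n.+2 -> S}) : {ffun 'I_n.+1 -> S} :=
  [ffun j => f (lift ord0 j)].

Lemma fcons0 (S : finType) n a (g : {ffun 'I_n.+1 -> S}) : fcons a g ord0 = a.
Proof. by rewrite ffunE unlift_none. Qed.
Lemma fconsS (S : finType) n a (g : {ffun 'I_n.+1 -> S}) j : fcons a g (lift ord0 j) = g j.
Proof. by rewrite ffunE liftK. Qed.
Lemma fcons_eta (S : finType) n (f : {ffun 'I_n.+2 -> S}) : fcons (f ord0) (ftail f) = f.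
Proof. by apply/ffunP => i; rewrite ffunE; case: unliftP => [j ->|->]; rewrite ?ffunE. Qed.
Lemma ftail_fcons (S : finType) n a (g : {ffun 'I_n.+1 -> S}) : ftail (fcons a g) = g.
Proof. by apply/ffunP => j; rewrite ffunE fconsS. Qed.

Lemma sum_ffunS (R : realType) (S : finType) n (F : {ffun 'I_n.+2 -> S} -> R) :
  \sum_(f : {ffun 'I_n.+2 -> S}) F f = \sum_(a : S) \sum_(g : {ffun 'I_n.+1 -> S}) F (fcons a g).
Proof.
rewrite pair_bigA /= (reindex (fun p : S * {ffun 'I_n.+1 -> S} => fcons p.1 p.2)) //=.
exists (fun f : {ffun 'I_n.+2 -> S} => (f ord0, ftail f)) => [[a g] _|f _] /=.
  by rewrite fcons0 ftail_fcons.
by rewrite fcons_eta.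
Qed.

Lemma inordS n k : (k <= n)%N -> (inord k.+1 : 'I_n.+2) = lift ord0 (inord k : 'I_n.+1).
Proof. by move=> kn; apply/val_inj; rewrite /= /bump /= !inordK. Qed.
Lemma inord0 n : (inord 0 : 'I_n.+1) = ord0.
Proof. by apply/val_inj; rewrite /= inordK. Qed.
Lemma ord_maxS n : (ord_max : 'I_n.+2) = lift ord0 (ord_max : 'I_n.+1).
Proof. by apply/val_inj; rewrite /= /bump. Qed.

Lemma path_weight_cons (R : realType) (S : finType) (P : S -> S -> R) n a (g : {ffun 'I_n.+1 -> S}) :
  path_weight P (fcons a g) = P a (g ord0) * path_weight P g.
Proof.
rewrite /path_weight big_ord_recl inord0 fcons0 (inordS (leq0n _)) fconsS inord0.
congr (_ * _); apply: eq_bigr => k _.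
rewrite lift0 inordS; last by rewrite ltnW.
by rewrite inordS ?fconsS // ltnW // ltnS.
Qed.

Lemma cond_cons (S : finType) n (y a : S) (g : {ffun 'I_n.+1 -> S}) :
  [forall k : 'I_n.+2, (val k < n.+1)%N ==> (fcons a g k != y)] =
  (a != y) && [forall k : 'I_n.+1, (val k < n)%N ==> (g k != y)].
Proof.
apply/forallP/andP => [H|[ay /forallP H] k].
  split; first by move: (H ord0); rewrite fcons0.
  by apply/forallP => j; move: (H (lift ord0 j)); rewrite fconsS /= /bump /= ltnS.
case: (unliftP ord0 k) => [j ->|->]; last by rewrite fcons0.
by rewrite fconsS /= /bump /= ltnS; exact: H.
Qed.

Lemma hit0 (R : realType) (S : finType) (P : S -> S -> R) y z :
  hit_exact P y 0 z = (z == y)%:R.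
Proof.
rewrite /hit_exact.
have E (f : {ffun 'I_1 -> S}) : (ord_max : 'I_1) = ord0 by apply/val_inj.
case: (eqVneq z y) => [->|zy].
  rewrite (big_pred1 [ffun=> y]); first by rewrite /path_weight big_ord0.
  move=> f /=; rewrite (E f) andbA andbb.
  have -> : [forall k : 'I_1, (val k < 0)%N ==> (f k != y)] by apply/forallP.
  rewrite andbT; apply/eqP/eqP => [fy|->]; last by rewrite ffunE.
  by apply/ffunP => i; rewrite ffunE (ord1 i).
rewrite big1 // => f /and3P[/eqP f0 /eqP fm _].
by move: zy; rewrite -f0 -fm (E f) eqxx.
Qed.

Lemma sum_first (R : realType) (S : finType) n (P : S -> S -> R) z
   (F : {ffun 'I_n.+1 -> S} -> R) (Q : pred {ffun 'I_n.+1 -> S}) :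
  \sum_(b : S) P z b * \sum_(f : {ffun 'I_n.+1 -> S} | (f ord0 == b) && Q f) F f =
  \sum_(f : {ffun 'I_n.+1 -> S}) (if Q f then P z (f ord0) * F f else 0).
Proof.
rewrite -big_mkcond /= (partition_big (fun f : {ffun 'I_n.+1 -> S} => f ord0) xpredT) //=.
apply: eq_bigr => b _; rewrite mulr_sumr; apply: eq_big => f.
  by rewrite andbC.
by move=> /andP[/eqP -> _].
Qed.

Lemma hitS (R : realType) (S : finType) (P : S -> S -> R) y n z :
  hit_exact P y n.+1 z = (z != y)%:R * \sum_b P z b * hit_exact P y n b.
Proof.
rewrite /hit_exact big_mkcond sum_ffunS /=.
under eq_bigr => a _ do under eq_bigr => g _ do
  rewrite fcons0 ord_maxS fconsS cond_cons path_weight_cons.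
rewrite (bigD1 z) //= [X in _ + X]big1 ?addr0; last first.
  move=> a az; apply: big1 => g _; by rewrite (negbTE az).
rewrite sum_first mulr_sumr; apply: eq_bigr => g _.
case: (eqVneq z y) => [->|zy]; first by rewrite eqxx /= andbF mul0r.
by rewrite eqxx /= mul1r.
Qed.

Definition sv (R : realType) (S : finType) (P : S -> S -> R) y N z := 1 - hit_le P y N z.

Lemma hit_le0 (R : realType) (S : finType) (P : S -> S -> R) y z :
  hit_le P y 0 z = (z == y)%:R.
Proof. by rewrite /hit_le big_nat1 hit0. Qed.

Lemma hit_leS (R : realType) (S : finType) (P : S -> S -> R) y N z :
  hit_le P y N.+1 z = (z == y)%:R + (z != y)%:R * \sum_b P z b * hit_le P y N b.
Proof.
rewrite /hit_le big_nat_recl // hit0; congr (_ + _).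
under eq_bigr do rewrite hitS.
rewrite -mulr_sumr; congr (_ * _).
under [RHS]eq_bigr do rewrite mulr_sumr.
by rewrite exchange_big.
Qed.

Lemma hit_le_recr (R : realType) (S : finType) (P : S -> S -> R) y N z :
  hit_le P y N.+1 z = hit_le P y N z + hit_exact P y N.+1 z.
Proof. by rewrite /hit_le big_nat_recr. Qed.

Lemma hit_exact_ge0 (R : realType) (S : finType) (P : S -> S -> R) y n z :
  stochastic P -> 0 <= hit_exact P y n z.
Proof.
move=> [P0 _]; apply: sumr_ge0 => f _; apply: prodr_ge0 => k _; exact: P0.
Qed.

Lemma sv0 (R : realType) (S : finType) (P : S -> S -> R) y z :
  sv P y 0 z = (z != y)%:R.
Proof. by rewrite /sv hit_le0; case: eqVneq => _; rewrite ?subrr ?subr0. Qed.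

Lemma svS (R : realType) (S : finType) (P : S -> S -> R) y N z :
  stochastic P ->
  sv P y N.+1 z = (z != y)%:R * \sum_b P z b * sv P y N b.
Proof.
move=> [_ P1]; rewrite /sv hit_leS.
under [X in _ = _ * X]eq_bigr do rewrite mulrBr mulr1.
rewrite sumrB P1; case: eqVneq => _ /=; rewrite ?mul0r ?mul1r; ring.
Qed.

Lemma Qmono (R : realType) (S : finType) (P : S -> S -> R) y z (f g : S -> R) :
  stochastic P -> (forall b, f b <= g b) ->
  (z != y)%:R * \sum_b P z b * f b <= (z != y)%:R * \sum_b P z b * g b.
Proof.
move=> [P0 _] fg; apply: ler_wpM2l => //; apply: ler_sum => b _.
by apply: ler_wpM2l.
Qed.

Lemma sv_bounds (R : realType) (S : finType) (P : S -> S -> R) y N z :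
  stochastic P -> 0 <= sv P y N z <= 1.
Proof.
move=> st; elim: N z => [|N IH] z; first by rewrite sv0; case: (z != y); rewrite /= ?lexx ?ler01.
rewrite svS //; apply/andP; split.
  case: st => P0 _; apply: mulr_ge0 => //; apply: sumr_ge0 => b _.
  by apply: mulr_ge0 => //; case/andP: (IH b).
apply: (le_trans (@Qmono _ _ P y z _ (fun=> 1) st _)).
  by move=> b; case/andP: (IH b).
case: st => _ P1; under eq_bigr do rewrite mulr1.
by rewrite P1 mulr1; case: (z != y).
Qed.

Lemma sv_dec (R : realType) (S : finType) (P : S -> S -> R) y N z :
  stochastic P -> sv P y N.+1 z <= sv P y N z.
Proof.
move=> st; elim: N z => [|N IH] z.
  rewrite svS // sv0.
  apply: (le_trans (@Qmono _ _ P y z _ (fun=> 1) st _)).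
    by move=> b; rewrite sv0; case: (b != y).
  case: st => _ P1; under eq_bigr do rewrite mulr1.
  by rewrite P1 mulr1.
by rewrite svS // [leRHS]svS //; apply: Qmono.
Qed.

Lemma sv_mono (R : realType) (S : finType) (P : S -> S -> R) y m n z :
  stochastic P -> (m <= n)%N -> sv P y n z <= sv P y m z.
Proof.
move=> st mn; rewrite -(subnK mn); elim: (n - m)%N => [|d IH] //.
by rewrite addSn (le_trans (sv_dec _ _ _ st)).
Qed.

Lemma sv_y (R : realType) (S : finType) (P : S -> S -> R) y N :
  stochastic P -> sv P y N y = 0.
Proof. by move=> st; case: N => [|N]; rewrite ?sv0 ?svS // eqxx ?mul0r. Qed.

Lemma sv_shift (R : realType) (S : finType) (P : S -> S -> R) y T c :
  stochastic P -> (forall z, sv P y T z <= c) ->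
  forall m z, sv P y (m + T) z <= c * sv P y m z.
Proof.
move=> st H; elim=> [|m IH] z.
  rewrite add0n sv0; case: eqVneq => [->|zy]; first by rewrite sv_y // mulr0.
  by rewrite mulr1.
rewrite addSn !svS //.
have -> : c * ((z != y)%:R * \sum_b P z b * sv P y m b) =
    (z != y)%:R * \sum_b P z b * (c * sv P y m b).
  rewrite mulrCA; congr (_ * _); rewrite mulr_sumr; apply: eq_bigr => b _; exact: mulrCA.
exact: Qmono.
Qed.

Lemma sv_geom (R : realType) (S : finType) (P : S -> S -> R) y T x :
  stochastic P -> (forall z, sv P y T z <= sv P y T x) ->
  forall k z, sv P y (k * T) z <= (sv P y T x) ^+ k.
Proof.
move=> st H; elim=> [|k IH] z.
  by rewrite mul0n expr0; case/andP: (sv_bounds y 0 z st).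
rewrite mulSnr exprS (le_trans (sv_shift st H _ _)) //.
by apply: ler_wpM2l => //; case/andP: (sv_bounds y T x st).
Qed.

Lemma geom_sum (R : realType) (c : R) K :
  (1 - c) * \sum_(0 <= k < K) c ^+ k = 1 - c ^+ K.
Proof.
elim: K => [|K IH]; first by rewrite big_geq // mulr0 expr0 subrr.
rewrite big_nat_recr //= mulrDr IH exprS; ring.
Qed.

Lemma sum_sv_KT (R : realType) (S : finType) (P : S -> S -> R) y T x :
  stochastic P -> (forall z, sv P y T z <= sv P y T x) ->
  forall K, \sum_(0 <= n < K * T) sv P y n x <= T%:R * \sum_(0 <= k < K) (sv P y T x) ^+ k.
Proof.
move=> st H; elim=> [|K IH]; first by rewrite mul0n !big_geq // mulr0.
rewrite mulSnr (big_cat_nat _ (n := K * T)) //=; last exact: leq_addr.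
rewrite big_nat_recr //= mulrDr lerD //.
apply: (le_trans (ler_sum_nat (G := fun=> sv P y T x ^+ K) _)).
  move=> n /andP[Kn _]; apply: le_trans (sv_geom st H K x).
  exact: sv_mono.
by rewrite sumr_const_nat addKn mulr_natl.
Qed.

Lemma sum_sv_bound (R : realType) (S : finType) (P : S -> S -> R) y T x :
  stochastic P -> (0 < T)%N -> (forall z, sv P y T z <= sv P y T x) ->
  forall N, (1 - sv P y T x) * \sum_(0 <= n < N) sv P y n x <= T%:R.
Proof.
move=> st T0 H N.
have /andP[c0 c1] : 0 <= sv P y T x <= 1 by exact: sv_bounds.
have c0' : 0 <= 1 - sv P y T x by rewrite subr_ge0.
apply: (le_trans (y := (1 - sv P y T x) * \sum_(0 <= n < N * T) sv P y n x)).
  apply: ler_wpM2l => //.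
  rewrite [leRHS](big_cat_nat _ (n := N)) //=; last by rewrite leq_pmulr.
  rewrite lerDl; apply: sumr_ge0 => n _; by case/andP: (sv_bounds y n x st).
apply: (le_trans (ler_wpM2l c0' (sum_sv_KT st H N))).
rewrite mulrCA geom_sum ler_piMr // ?ler0n // lerBlDr lerDl.
exact: exprn_ge0.
Qed.

Lemma exp_partial (R : realType) (S : finType) (P : S -> S -> R) y x N :
  stochastic P ->
  \sum_(0 <= n < N.+1) n%:R * hit_exact P y n x =
  \sum_(0 <= j < N) sv P y j x - N%:R * sv P y N x.
Proof.
move=> st; elim: N => [|N IH].
  by rewrite big_nat1 big_geq // !mul0r subr0.
have hS : hit_exact P y N.+1 x = sv P y N x - sv P y N.+1 x.
  by rewrite /sv hit_le_recr; ring.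
rewrite big_nat_recr //= IH hS big_nat_recr //= -natr1; ring.
Qed.

Theorem lemma6p6 (R : realType) (S : finType) (P : S -> S -> R) (y : S)
  (T : nat) (x : S) :
  stochastic P -> (0 < T)%N ->
  (forall z : S, hit_le P y T x <= hit_le P y T z) ->
  ((hit_le P y T x)%:E * exp_hit P y x <= (T%:R : R)%:E)%E.
Proof.
move=> st T0 Hmin.
have H : forall z, sv P y T z <= sv P y T x by move=> z; rewrite /sv lerB.
have hp : hit_le P y T x = 1 - sv P y T x by rewrite /sv opprB addrC subrK.
have /andP[c0 c1] := sv_bounds y T x st.
have h0 n : 0 <= hit_exact P y n x by exact: hit_exact_ge0.
have [p0|pgt0] := eqVneq (hit_le P y T x) 0.
  by rewrite p0 mul0e lee_fin ler0n.
have pge0 : 0 <= hit_le P y T x by rewrite hp subr_ge0.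
have ppos : 0 < hit_le P y T x by rewrite lt_def pgt0.
have series1 : (\sum_(n <oo) (hit_exact P y n x)%:E = 1%:E)%E.
  apply/le_anti/andP; split.
    apply: lime_le; first by apply: is_cvg_nneseries => n _ _; rewrite lee_fin.
    apply: nearW => N; rewrite sumEFin lee_fin.
    apply: (le_trans (y := \sum_(0 <= n < N.+1) hit_exact P y n x)).
      by rewrite big_nat_recr //= lerDl.
    rewrite -/(hit_le P y N x) -subr_ge0.
    have -> : 1 - hit_le P y N x = sv P y N x by [].
    by case/andP: (sv_bounds y N x st).
  apply/lee_subgt0Pr => e e0.
  have cabs : `|sv P y T x| < 1 by rewrite ger0_norm // -subr_gt0 -hp.
  have := cvg_expr cabs; move/cvgr0_norm_lt => /(_ e e0) [K _ HK].
  have HKK := HK K (leqnn K); rewrite /= ger0_norm ?exprn_ge0 // in HKK.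
  apply: (le_trans (y := (\sum_(0 <= n < (K * T).+1) (hit_exact P y n x)%:E)%E)).
    rewrite sumEFin -EFinB lee_fin -/(hit_le P y (K * T) x).
    have -> : hit_le P y (K * T) x = 1 - sv P y (K * T) x by rewrite /sv opprB addrC subrK.
    rewrite lerD2l lerN2; apply: le_trans (ltW HKK).
    exact: sv_geom.
  apply: (nneseries_lim_ge (P := xpredT)) => n _ _; by rewrite lee_fin.
rewrite /exp_hit series1 eqxx.
have hsum : forall N, \sum_(0 <= n < N) n%:R * hit_exact P y n x <= T%:R / hit_le P y T x.
  move=> [|N]; first by rewrite big_geq // divr_ge0 // ler0n.
  rewrite exp_partial // ler_pdivlMr // mulrC.
  apply: le_trans (sum_sv_bound st T0 H N); rewrite -hp.
  apply: ler_wpM2l => //; rewrite lerBlDr lerDl.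
  by apply: mulr_ge0; [exact: ler0n | case/andP: (sv_bounds y N x st)].
apply: (le_trans (y := ((hit_le P y T x)%:E * (T%:R / hit_le P y T x)%:E)%E)).
  apply: lee_wpmul2l; first by rewrite lee_fin.
  apply: lime_le.
    apply: is_cvg_nneseries => n _ _; rewrite lee_fin; apply: mulr_ge0 => //; exact: ler0n.
  by apply: nearW => N; rewrite sumEFin lee_fin.
by rewrite -EFinM mulrC divfK.
Qed.
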